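(* Let $G$ be a weighted graph as in the context. For every integer $m\geq 1$, \[\mathcal{E}_G(q_{m}^G,q_{m}^G)\leq \frac{2q_{2\lceil m/2\rceil}^G(\rho)}{m},\] where $\rho=\rho(G)$.
   Context: $G$ is a locally finite connected graph with at least two vertices, vertex set $V(G)$ and distinguished vertex $\rho=\rho(G)$; $\mu^G$ is a symmetric weight with $\mu^G_{xy}>0$ iff $\{x,y\}$ is an edge, $\mu^G_x:=\sum_y\mu^G_{xy}$, $\nu^G(A):=\sum_{x\in A}\mu^G_x$. The discrete time simple random walk $X^G$ has transition probabilities $P_G(x,y)=\mu^G_{xy}/\mu^G_x$ and law $\mathbf{P}^G_x$; $p^G_m(x,y):=\mathbf{P}^G_x(X^G_m=y)/\nu^G(\{y\})$, $q^G_m(x,y):=\frac12(p^G_m(x,y)+p^G_{m+1}(x,y))$, $q^G_m(x):=q^G_m(\rho,x)$ (so $q^G_m(\rho)=q^G_m(\rho,\rho)$). The generator is $\mathcal{L}_Gf(x)=\sum_yP_G(x,y)(f(y)-f(x))$, the inner product $(f,g)_G:=\sum_{x}f(x)g(x)\nu^G(\{x\})$, and the Dirichlet form $\mathcal{E}_G(f,g):=-(\mathcal{L}_Gf,g)_G$ on $\mathcal{F}_G:=\{f\in\mathbb{R}^{V(G)}:\mathcal{E}_G(f,f)<\infty\}$. *)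

(* Defs.v *)
From HB Require Import structures.
From mathcomp Require Import all_boot all_order all_algebra.
From mathcomp Require Import all_classical all_reals.
Set Implicit Arguments. Unset Strict Implicit. Unset Printing Implicit Defensive.
Import Order.TTheory GRing.Theory Num.Theory.
Local Open Scope classical_set_scope.
Local Open Scope ring_scope.

(* A weighted graph on the vertex type V is given by a weight function
   mu : V -> V -> R; {x,y} is an edge iff mu x y > 0. *)
Section WGraph.
Variables (R : realType) (V : choiceType) (mu : V -> V -> R).

Definition adj : rel V := fun x y => 0 < mu x y.

Definition is_weighted_graph : Prop :=
  (forall x y, mu x y = mu y x) /\
  (forall x y, 0 <= mu x y) /\
  (forall x, mu x x = 0) /\
  (forall x, finite_set [set y | mu x y != 0]) /\
  (forall x y, exists p : seq V, path adj x p /\ last x p = y) /\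
  (exists x y : V, x <> y).

(* mu_x = sum_y mu_xy  (also nu({x})) ; finitely supported by local finiteness *)
Definition muv (x : V) : R := \sum_(y \in [set: V]) mu x y.

Definition trans (x y : V) : R := mu x y / muv x.

Fixpoint trans_pow (m : nat) (x y : V) : R :=
  match m with
  | 0 => if x == y then 1 else 0
  | m'.+1 => \sum_(z \in [set: V]) trans x z * trans_pow m' z y
  end.

Definition hk (m : nat) (x y : V) : R := trans_pow m x y / muv y.

Definition qk (m : nat) (x y : V) : R := (hk m x y + hk m.+1 x y) / 2.

Definition gen (f : V -> R) (x : V) : R :=
  \sum_(y \in [set: V]) trans x y * (f y - f x).

Definition inner (f g : V -> R) : R :=
  \sum_(x \in [set: V]) f x * g x * muv x.

Definition dirichlet (f g : V -> R) : R := - inner (gen f) g.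

End WGraph.

(* Main.v *)
Require Import Defs.
From HB Require Import structures.
From mathcomp Require Import all_boot all_order all_algebra.
From mathcomp Require Import all_classical all_reals.
From mathcomp Require Import ring lra zify finmap.
Import Order.TTheory GRing.Theory Num.Theory.
Set Implicit Arguments. Unset Strict Implicit. Unset Printing Implicit Defensive.
Local Open Scope classical_set_scope.
Local Open Scope ring_scope.

Section Aux.
Variables (R : realType) (V : choiceType) (mu : V -> V -> R).
Hypothesis Hsym : forall x y, mu x y = mu y x.
Hypothesis Hnn : forall x y, 0 <= mu x y.
Hypothesis Hfin : forall x, finite_set [set y | mu x y != 0].
Hypothesis Hpos : forall x, 0 < muv mu x.

Lemma sumT (s : seq V) (f : V -> R) : (forall i, i \notin s -> f i = 0) ->
  \sum_(i \in [set: V]) f i = \sum_(i <- undup s) f i.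
Proof.
move=> fs; rewrite (fsbigE (undup s)) ?undup_uniq //.
  by apply: eq_bigl => i; rewrite in_setT.
by move=> i _; rewrite mem_undup; apply: fs.
Qed.

Lemma sum1T (y : V) (f : V -> R) : (forall z, z != y -> f z = 0) ->
  \sum_(i \in [set: V]) f i = f y.
Proof.
move=> fy; rewrite (@sumT [:: y]) /= ?big_seq1 //.
by move=> i; rewrite inE; apply: fy.
Qed.

Definition nbs (z : V) : seq V := fset_set [set y | mu z y != 0].

Lemma mem_nbs z y : (y \in nbs z) = (mu z y != 0).
Proof. rewrite /nbs. have := in_fset_set (Hfin z) y. move=> /= ->. by apply/idP/idP => [/set_mem|/mem_set]. Qed.

Fixpoint ball (x : V) (k : nat) : seq V :=
  match k with
  | 0 => [:: x]
  | k'.+1 => ball x k' ++ flatten [seq nbs z | z <- ball x k']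
  end.

Lemma ball_nb x k z y : z \in ball x k -> mu z y != 0 -> y \in ball x k.+1.
Proof.
move=> zb nz; rewrite /= mem_cat; apply/orP; right.
by apply/flatten_mapP; exists z => //; rewrite mem_nbs.
Qed.

Lemma ball_S x k : {subset ball x k <= ball x k.+1}.
Proof. by move=> y yb; rewrite /= mem_cat yb. Qed.

Lemma ball_mono x k l : (k <= l)%N -> {subset ball x k <= ball x l}.
Proof.
move=> /subnK <-; elim: (l - k)%N => [|d IH] y yb //=.
by apply: ball_S; apply: IH.
Qed.

Lemma ball_self x k : x \in ball x k.
Proof. by apply: (@ball_mono x 0) => //; rewrite inE. Qed.

Lemma ball_split x k y : y \in ball x k.+1 ->
  y \in ball x k \/ exists2 w, w \in ball x k & mu w y != 0.
Proof.
rewrite /= mem_cat => /orP[yb|/flatten_mapP[w wb]]; first by left.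
by rewrite mem_nbs => ?; right; exists w.
Qed.

Lemma ball_shift x z : mu x z != 0 -> forall n, {subset ball z n <= ball x n.+1}.
Proof.
move=> nz; elim=> [|n IH] y.
  rewrite /= inE => /eqP ->; apply: (@ball_nb x 0 x) => //; by rewrite inE.
move=> /ball_split [yb|[w wb nwy]].
  by apply: ball_S; apply: IH.
 apply: (@ball_nb x n.+1 w) => //; exact: IH.
Qed.

Lemma nbs_ball1 x y : mu x y != 0 -> y \in ball x 1.
Proof. by move=> nz; apply: (@ball_nb x 0 x) => //; rewrite inE. Qed.

Lemma sum_nz (f : V -> R) : \sum_(i \in [set: V]) f i != 0 -> exists i, f i != 0.
Proof.
move=> nz; apply/not_existsP => /= H; move: nz; rewrite fsbig1 ?eqxx //.
by move=> i _; apply/eqP; apply: contra_notT (H i) => /negbTE ->.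
Qed.

Lemma trans_nz x y : trans mu x y != 0 -> mu x y != 0.
Proof. by apply: contraNN => /eqP; rewrite /trans => ->; rewrite mul0r. Qed.

Lemma muv_sum x : muv mu x = \sum_(y <- undup (ball x 1)) mu x y.
Proof.
apply: sumT => i; apply: contraNeq => nz; exact: nbs_ball1.
Qed.

Lemma sum_trans x : \sum_(y \in [set: V]) trans mu x y = 1.
Proof.
rewrite (@sumT (ball x 1)); last first.
  move=> i; apply: contraNeq => /trans_nz; exact: nbs_ball1.
rewrite /trans -mulr_suml -muv_sum divff //; exact: lt0r_neq0.
Qed.

Lemma tp_supp n x y : trans_pow mu n x y != 0 -> y \in ball x n.
Proof.
elim: n x => [|n IH] x /=.
  by have [->|_] := eqVneq x y; rewrite ?inE ?eqxx.
move=> /sum_nz [z]; rewrite mulf_eq0 negb_or => /andP[/trans_nz h1 /IH h2].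
exact: ball_shift h2.
Qed.

Lemma CK n x y : trans_pow mu n.+1 x y =
  \sum_(z \in [set: V]) trans_pow mu n x z * trans mu z y.
Proof.
elim: n x => [|n IH] x.
  rewrite /= (@sum1T y); last by move=> z /negbTE ->; rewrite mulr0.
  rewrite eqxx mulr1 (@sum1T x) ?eqxx ?mul1r //.
  by move=> z; rewrite eq_sym => /negbTE ->; rewrite mul0r.
have -> : trans_pow mu n.+2 x y =
  \sum_(z \in [set: V]) trans mu x z * trans_pow mu n.+1 z y by [].
transitivity (\sum_(z <- undup (ball x 1)) \sum_(w <- undup (ball x n.+1))
    trans mu x z * (trans_pow mu n z w * trans mu w y)).
  rewrite (@sumT (ball x 1)); last first.
    move=> i; apply: contraNeq; rewrite mulf_eq0 negb_or => /andP[/trans_nz h _].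
    exact: nbs_ball1.
  apply: eq_bigr => z _; rewrite -mulr_sumr.
  have [tz|tz] := eqVneq (trans mu x z) 0; first by rewrite tz !mul0r.
  congr (_ * _); rewrite IH; apply: sumT => i; apply: contraNeq.
  rewrite mulf_eq0 negb_or => /andP[/tp_supp h _].
  exact: (ball_shift (trans_nz tz)).
rewrite exchange_big (@sumT (ball x n.+1)); last first.
  move=> i; apply: contraNeq; rewrite mulf_eq0 negb_or => /andP[h _].
  exact: (@tp_supp n.+1).
apply: eq_bigr => w _.
have -> : trans_pow mu n.+1 x w = \sum_(z \in [set: V]) trans mu x z * trans_pow mu n z w by [].
rewrite (@sumT (ball x 1)) ?mulr_suml.
  by apply: eq_bigr => z _; rewrite mulrA.
move=> i; apply: contraNeq; rewrite mulf_eq0 negb_or => /andP[/trans_nz h _].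
exact: nbs_ball1.
Qed.

End Aux.

Section Tele.
Variable R : realType.
Lemma tele (C : nat -> R) m :
  (forall j, (j < m)%N -> C j.+1 - C j.+2 <= C j - C j.+1) ->
  forall k, (k <= m)%N -> (m - k + 1)%:R * (C m - C m.+1) <= C k - C m.+1.
Proof.
move=> hD.
have mono : forall d j, (j + d)%N = m -> C m - C m.+1 <= C j - C j.+1.
  elim=> [|d IH] j hj; first by move: hj; rewrite addn0 => ->.
  apply: le_trans (IH j.+1 _) _; first by rewrite addSnnS.
  by apply: hD; lia.
have : forall d k, (k + d)%N = m -> (d.+1)%:R * (C m - C m.+1) <= C k - C m.+1.
  elim=> [|d IH] k hk; first by move: hk; rewrite addn0 => ->; rewrite mul1r.
  have h1 := IH k.+1 ltac:(lia).
  have h2 := mono d.+1 k hk.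
  rewrite -addn1 natrD; move: h1 h2; rewrite -addn1 natrD; lra.
move=> H k km; rewrite addn1; apply: H; lia.
Qed.
End Tele.


Section Main.
Variables (R : realType) (V : choiceType) (mu : V -> V -> R) (rho : V) (K : nat).
Hypothesis Hsym : forall x y, mu x y = mu y x.
Hypothesis Hnn : forall x y, 0 <= mu x y.
Hypothesis Hfin : forall x, finite_set [set y | mu x y != 0].
Hypothesis Hpos : forall x, 0 < muv mu x.
Hypothesis HK : (0 < K)%N.


Definition v n := hk mu n rho.
Definition U := undup (ball mu rho K).
Definition PU (f : V -> R) x := \sum_(y <- U) trans mu x y * f y.
Definition ipU (f h : V -> R) := \sum_(x <- U) f x * h x * muv mu x.

Lemma muv_neq0 x : muv mu x != 0.
Proof. exact: lt0r_neq0. Qed.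

Lemma v_supp n x : v n x != 0 -> x \in ball mu rho n.
Proof.
rewrite /v /hk mulf_eq0 negb_or => /andP[h _].
exact: (@tp_supp _ _ _ Hfin _ _ _ h).
Qed.

Lemma v_succ n x : v n.+1 x = \sum_(y \in [set: V]) trans mu x y * v n y.
Proof.
rewrite /v /hk (CK Hfin) mulr_fsuml; apply: eq_fsbigr => y _.
rewrite /trans Hsym; have := muv_neq0 x; have := muv_neq0 y => h1 h2; field.
by rewrite h1 h2.
Qed.

Lemma vP n : (n <= K)%N -> PU (v n) = v n.+1.
Proof.
move=> nK; apply: funext => x; rewrite v_succ /PU (@sumT _ _ (ball mu rho K)) //.
move=> i; apply: contraNeq; rewrite mulf_eq0 negb_or => /andP[_ /v_supp h].
exact: ball_mono nK _ h.
Qed.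

Lemma trans_mu x y : trans mu x y * muv mu x = mu x y.
Proof. by rewrite /trans divfK // muv_neq0. Qed.

Lemma ipU_P (g k : V -> R) :
  ipU (PU g) k = \sum_(x <- U) \sum_(y <- U) mu x y * g y * k x.
Proof.
apply: eq_bigr => x _; rewrite /PU !mulr_suml; apply: eq_bigr => y _.
by rewrite -trans_mu; ring.
Qed.

Lemma ipU_sym f h : ipU f h = ipU h f.
Proof. by apply: eq_bigr => x _; rewrite (mulrC (f x)). Qed.

Lemma ipU_adj f h : ipU (PU f) h = ipU f (PU h).
Proof.
rewrite [RHS]ipU_sym !ipU_P [RHS]exchange_big /=; apply: eq_bigr => x _.
by apply: eq_bigr => y _; rewrite Hsym; ring.
Qed.

Lemma ipU_linl a b f g h :
  ipU (fun x => a * f x + b * g x) h = a * ipU f h + b * ipU g h.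
Proof.
rewrite /ipU !mulr_sumr -big_split; apply: eq_bigr => x _ /=; ring.
Qed.

Lemma ipU_linr a b f g h :
  ipU h (fun x => a * f x + b * g x) = a * ipU h f + b * ipU h g.
Proof. by rewrite ipU_sym ipU_linl (ipU_sym f) (ipU_sym g). Qed.

Lemma PU_lin a b f g :
  PU (fun x => a * f x + b * g x) = fun x => a * PU f x + b * PU g x.
Proof.
apply: funext => x; rewrite /PU !mulr_sumr -big_split; apply: eq_bigr => y _ /=; ring.
Qed.

Definition a n := ipU (v n) (v 0).

Lemma ip_v i j : (i + j <= K)%N -> ipU (v i) (v j) = a (i + j).
Proof.
elim: j i => [|j IH] i h; first by rewrite addn0.
rewrite -vP; last by lia.
rewrite -ipU_adj vP; last by lia.
by rewrite IH ?addSnnS //; lia.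
Qed.

Lemma a_hk n : a n = hk mu n rho rho.
Proof.
have rU : rho \in U by rewrite mem_undup ball_self.
rewrite /a /ipU (bigD1_seq rho) ?undup_uniq //= big1 ?addr0.
  by rewrite /v /hk /= eqxx mul1r divfK // muv_neq0.
move=> x xr; rewrite /v /hk /= eq_sym (negbTE xr) !mul0r; ring.
Qed.

Lemma pos f : (forall x, x \notin ball mu rho K.-1 -> f x = 0) ->
  0 <= ipU f f + ipU (PU f) f.
Proof.
move=> fs.
set S1 := \sum_(x <- U) \sum_(y <- U) mu x y * f x * f x.
set S1' := \sum_(x <- U) \sum_(y <- U) mu x y * f y * f y.
set S2 := \sum_(x <- U) \sum_(y <- U) mu x y * f y * f x.
have e1 : ipU f f = S1.
  apply: eq_bigr => x _.
  have [fx|fx] := eqVneq (f x) 0.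
    by rewrite fx big1 ?mulr0 ?mul0r // => y _; rewrite !mulr0.
  have xb : x \in ball mu rho K.-1 by apply: contraNT fx => /fs ->.
  rewrite /muv (@sumT _ _ (ball mu rho K)).
    by rewrite mulr_sumr; apply: eq_bigr => y _; ring.
  move=> y; apply: contraNeq => nz.
  by have := ball_nb Hfin xb nz; rewrite prednK.
have e2 : ipU (PU f) f = S2 by rewrite ipU_P.
have e3 : S1 = S1'.
  rewrite /S1 /S1' exchange_big /=; apply: eq_bigr => x _.
  by apply: eq_bigr => y _; rewrite Hsym.
have e4 : \sum_(x <- U) \sum_(y <- U) mu x y * (f x + f y) ^+ 2 = S1 + S1' + (S2 + S2).
  rewrite /S1 /S1' /S2 -!big_split; apply: eq_bigr => x _ /=.
  rewrite -!big_split; apply: eq_bigr => y _ /=; ring.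
have : 0 <= \sum_(x <- U) \sum_(y <- U) mu x y * (f x + f y) ^+ 2.
  apply: sumr_ge0 => x _; apply: sumr_ge0 => y _.
  by apply: mulr_ge0 => //; apply: sqr_ge0.
rewrite e4 e1 e2 -e3; lra.
Qed.


Lemma v_out n x : (n < K)%N -> x \notin ball mu rho K.-1 -> v n x = 0.
Proof.
move=> nK xb; apply/eqP; apply: contraNT xb => /v_supp h.
by apply: (ball_mono _ h); lia.
Qed.

Lemma q_supp m x : qk mu m rho x != 0 -> x \in ball mu rho m.+1.
Proof.
apply: contraNT => xb.
have h0 : v m x = 0.
  by apply/eqP; apply: contraNT xb => /v_supp h; apply: ball_S.
have h1 : v m.+1 x = 0 by apply/eqP; apply: contraNT xb => /v_supp.
by rewrite /qk -/(v m x) -/(v m.+1 x) h0 h1 addr0 mul0r.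
Qed.

Lemma dir_eq m : (m.+3 <= K)%N ->
  dirichlet mu (qk mu m rho) (qk mu m rho) =
  ipU (qk mu m rho) (qk mu m rho) - ipU (PU (qk mu m rho)) (qk mu m rho).
Proof.
move=> mK; set q := qk mu m rho.
rewrite /dirichlet /inner (@sumT _ _ (ball mu rho K)); last first.
  move=> x; apply: contraNeq => nz.
  have h : q x != 0 by apply: contraNneq nz => ->; rewrite mulr0 mul0r.
  by apply: (ball_mono _ (q_supp h)); lia.
rewrite /ipU -sumrB -sumrN; apply: eq_bigr => x _.
have [qx|qx] := eqVneq (q x) 0; first by rewrite qx !(mulr0, mul0r) subr0 oppr0.
have xb := q_supp qx.
have st : \sum_(y <- U) trans mu x y = 1.
  rewrite -(sum_trans Hfin Hpos x) (@sumT _ _ (ball mu rho K)) //.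
  move=> y; apply: contraNeq => /trans_nz nz.
  by apply: (ball_mono _ (ball_nb Hfin xb nz)); lia.
have -> : gen mu q x = PU q x - q x.
  rewrite /gen (@sumT _ _ (ball mu rho K)); last first.
    move=> y; apply: contraNeq; rewrite mulf_eq0 negb_or => /andP[/trans_nz nz _].
    by apply: (ball_mono _ (ball_nb Hfin xb nz)); lia.
  rewrite /PU -/U; under eq_bigr do rewrite mulrBr.
  by rewrite sumrB -mulr_suml st mul1r.
ring.
Qed.

Definition C j := a (j + j) + a (j + j).+1.

Lemma Cpos j : ((j + j).+2 <= K)%N -> 0 <= C j.
Proof.
move=> jK.
have sup : forall x, x \notin ball mu rho K.-1 -> v j x = 0.
  by move=> x xb; apply: (v_out _ xb); lia.
have := pos sup.
rewrite vP; last by lia.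
rewrite ip_v; last by lia.
rewrite ip_v; last by lia.
by rewrite /C addSn.
Qed.

Lemma Dmon j : (j + j + 6 <= K)%N -> C j.+1 - C j.+2 <= C j - C j.+1.
Proof.
move=> jK.
have sup : forall x, x \notin ball mu rho K.-1 -> 1 * v j x + (-1) * v j.+2 x = 0.
  by move=> x xb; rewrite !(@v_out _ x _ xb) ?mulr0 ?addr0 //; lia.
have := pos sup.
rewrite PU_lin vP; last by lia.
rewrite vP; last by lia.
rewrite !ipU_linl !ipU_linr.
rewrite !ip_v; try lia.
rewrite /C ?addSn ?addnS; lra.
Qed.

Lemma main_ineq m : (1 <= m)%N -> (2 * m + 6 <= K)%N ->
  dirichlet mu (qk mu m rho) (qk mu m rho)
    <= 2 * qk mu (2 * ((m + 1) %/ 2))%N rho rho / m%:R.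
Proof.
move=> m1 mK.
set k := ((m + 1) %/ 2)%N.
have k2 : (2 * k <= m + 1)%N by rewrite /k mulnC leq_trunc_div.
have km : (k <= m)%N by lia.
have qE : qk mu m rho = fun x => 2^-1 * v m x + 2^-1 * v m.+1 x.
  by apply: funext => x; rewrite /qk /v; ring.
rewrite dir_eq; last by lia.
rewrite qE PU_lin !vP; try lia.
rewrite !ipU_linl !ipU_linr !ip_v; try lia.
rewrite ?addSn ?addnS.
rewrite /qk -!a_hk mul2n -addnn.
have T := @tele R C m (fun j jm => @Dmon j ltac:(lia)) k km.
rewrite natrD natrB // in T.
have Cm1 := @Cpos m.+1 ltac:(lia).
have Ck := @Cpos k ltac:(lia).
move: T Cm1 Ck; rewrite /C ?addSn ?addnS => T Cm1 Ck.
have M0 : 0 < m%:R :> R by rewrite ltr0n; lia.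
have k2r : (2 * k)%:R <= (m + 1)%:R :> R by rewrite ler_nat.
rewrite natrM natrD in k2r.
rewrite ler_pdivlMr //.
set B := a (m + m) + a (m + m).+1 - (a (m + m).+2 + a (m + m).+3).
rewrite [X in X * _ <= _](_ : _ = B / 4); last by rewrite /B; field.
move: T; rewrite -/B => T.
have [B0|B0] := lerP 0 B.
  have h : 0 <= m%:R - k%:R + 1 - m%:R / 4 :> R by lra.
  have := mulr_ge0 B0 h.
  nra.
nra.
Qed.

End Main.

Lemma muv_pos (R : realType) (V : choiceType) (mu : V -> V -> R) :
  is_weighted_graph mu -> forall x, 0 < muv mu x.
Proof.
move=> [Hsym [Hnn [Hloop [Hfin [Hconn [a0 [b0 ab]]]]]]] x.
pose y := if x == a0 then b0 else a0.
have yx : y != x.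
  rewrite /y; have [->|xa] := eqVneq x a0; first by rewrite eq_sym; apply/eqP.
  by rewrite eq_sym.
have [p [pp pl]] := Hconn x y.
case: p pp pl => [|z p] /=; first by move=> _ e; move: yx; rewrite -e eqxx.
move=> /andP[xz _] _.
have nz : mu x z != 0 by rewrite gt_eqF.
rewrite (muv_sum Hfin) (bigD1_seq z) ?undup_uniq ?mem_undup ?(nbs_ball1 Hfin) //=.
by apply: ltr_wpDr => //; apply: sumr_ge0 => i _.
Qed.

Theorem lemma4p2 (R : realType) (V : choiceType) (mu : V -> V -> R) (rho : V)
  (HG : is_weighted_graph mu) (m : nat) (hm : (1 <= m)%N) :
  dirichlet mu (qk mu m rho) (qk mu m rho)
    <= 2 * qk mu (2 * ((m + 1) %/ 2))%N rho rho / m%:R.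
Proof.
have Hpos := muv_pos HG.
move: HG => [Hsym [Hnn [Hloop [Hfin _]]]].
apply: (@main_ineq R V mu rho (2 * m + 6)) => //; lia.
Qed.
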